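(* For the $2$-cache problem, there is no knowledge state algorithm that is $\tfrac32$-competitive as a knowledge state algorithm and all of whose knowledge states have at most two active pages.
   Context: The $2$-cache problem: an infinite set $P$ of pages; states are the $2$-element subsets of $P$, with a given initial cache $s^0$; requests are pages; $d(x,y)=|x\setminus y|$; $\mathrm{cost}(x,r,y)=2$ if $x=y$ and $r\notin x$, $=d(x,y)$ if $r\in x$ or $r\in y$, and $=d(x,y)+1$ otherwise. $\Pi$ is the set of finitely supported probability distributions on states; $\mathrm{cost}(\pi,r,\pi')$ is the minimum of $\sum_{x,y}\gamma(x,y)\mathrm{cost}(x,r,y)$ over distributions $\gamma$ on $\mathrm{supp}(\pi)\times\mathrm{supp}(\pi')$ with marginals $\pi,\pi'$. An estimator is a function $\omega\ge0$ on states with $\omega(y)\le\omega(x)+d(x,y)$; a set $S$ supports $\omega$ if each $y$ has $x\in S$ with $\omega(y)=\omega(x)+d(x,y)$, and the estimator support is the minimal such set. The update is $(\omega\wedge r)(y)=\inf_x\{\omega(x)+\mathrm{cost}(x,r,y)\}$. Knowledge state algorithm $\mathcal A$: a knowledge state is a pair $k=(\pi,\omega)$, $\pi\in\Pi$, $\omega$ an estimator with finite support; initial state $(s^0,\omega^0)$ with $\omega^0(s^0)=0$. For each $k=(\pi,\omega)$ and request $r$, $\mathcal A$ specifies subsequents $k_i=(\pi_i,\omega_i)$ with weights $\lambda_i>0$ summing to $1$ (next state $k_i$ with probability $\lambda_i$) and a number $\mathrm{adjust}(k,r)$ with $(\omega\wedge r)(x)\ge\mathrm{adjust}(k,r)+\sum_i\lambda_i\omega_i(x)$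 for all $x$. Step cost $\mathrm{cost}(\pi,r,\sum_i\lambda_i\pi_i)$; $\mathrm{cost}_{\mathcal A}(\varrho)$ and $\mathrm{adjust}_{\mathcal A}(\varrho)$ are the sums over the steps. $\mathcal A$ is $C$-competitive as a knowledge state algorithm if there is $K$ with $E(\mathrm{cost}_{\mathcal A}(\varrho))\le C\cdot E(\mathrm{adjust}_{\mathcal A}(\varrho)+\omega^n(x))+K$ for every $\varrho=r^1\dots r^n$ and every state $x$, where $\omega^n$ is the estimator after $n$ steps. The active pages of a knowledge state $(\pi,\omega)$ are the pages belonging to some configuration in the distributional support of $\pi$ or in the estimator support of $\omega$. *)

(* Defs.v *)
From HB Require Import structures.
From mathcomp Require Import all_boot all_order all_algebra.
From mathcomp Require Import finmap.
From mathcomp Require Import boolp classical_sets reals.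
From Stdlib Require List.
Set Implicit Arguments. Unset Strict Implicit. Unset Printing Implicit Defensive.
Import Order.TTheory GRing.Theory Num.Theory.
Local Open Scope ring_scope.
Local Open Scope classical_set_scope.


Section TwoCache.
Variable R : realType.
Variable P : choiceType.

Definition state := {s : {fset P} | #|` s| == 2%N}.

Definition dist (x y : state) : R := (#|` (val x `\` val y)%fset|)%:R.

Definition cost (x : state) (r : P) (y : state) : R :=
  if (x == y) && (r \notin val x) then 2
  else if (r \in val x) || (r \in val y) then dist x y
  else dist x y + 1.

Definition is_distr (pi : state -> R) : Prop :=
  (forall x, 0 <= pi x) /\
  exists s : seq state, [/\ uniq s, (forall x, pi x != 0 -> x \in s)
                          & \sum_(x <- s) pi x = 1].

Definition supp (pi : state -> R) (x : state) : Prop := 0 < pi x.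

Definition coupling_on (g : state -> state -> R) (pi pi' : state -> R)
    (sx sy : seq state) : Prop :=
  [/\ forall x y, 0 <= g x y,
      forall x y, g x y != 0 -> supp pi x /\ supp pi' y,
      uniq sx /\ uniq sy,
      (forall x, pi x != 0 -> x \in sx) /\ (forall y, pi' y != 0 -> y \in sy)
    & (forall x, \sum_(y <- sy) g x y = pi x) /\
      (forall y, \sum_(x <- sx) g x y = pi' y)].

(** cost(pi, r, pi') : the minimum (= infimum, it is attained) over couplings. *)
Definition tcost (pi : state -> R) (r : P) (pi' : state -> R) : R :=
  inf [set v | exists g sx sy, coupling_on g pi pi' sx sy /\
         v = \sum_(x <- sx) \sum_(y <- sy) g x y * cost x r y].

Definition is_estimator (w : state -> R) : Prop :=
  (forall x, 0 <= w x) /\ (forall x y, w y <= w x + dist x y).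

Definition supports (w : state -> R) (S : set state) : Prop :=
  forall y, exists2 x, S x & w y = w x + dist x y.

Definition is_est_support (w : state -> R) (S : set state) : Prop :=
  supports w S /\ (forall S', S' `<=` S -> supports w S' -> S' = S).

Definition has_finite_support (w : state -> R) : Prop :=
  exists s : seq state, supports w [set x | x \in s].

Definition update (w : state -> R) (r : P) (y : state) : R :=
  inf [set w x + cost x r y | x in [set: state]].

Record kstate := KState { kpi : state -> R ; komega : state -> R }.

Definition wf_kstate (k : kstate) : Prop :=
  [/\ is_distr (kpi k), is_estimator (komega k) & has_finite_support (komega k)].

Definition active (k : kstate) (p : P) : Prop :=
  (exists x, supp (kpi k) x /\ p \in val x) \/
  (exists S, is_est_support (komega k) S /\ exists x, S x /\ p \in val x).

Definition at_most_two_active (k : kstate) : Prop :=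
  exists a b : P, forall p, active k p -> p = a \/ p = b.

Definition kinit (s0 : state) : kstate :=
  KState (fun x => (x == s0)%:R) (fun x => dist s0 x).

Record kalg := KAlg {
  ka_next : kstate -> P -> seq (R * kstate) ;
  ka_adjust : kstate -> P -> R }.

Definition mix (l : seq (R * kstate)) (x : state) : R :=
  \sum_(p <- l) p.1 * kpi p.2 x.

Inductive reachable (A : kalg) (s0 : state) : kstate -> Prop :=
| reach0 : reachable A s0 (kinit s0)
| reachS k r lam k' : reachable A s0 k -> List.In (lam, k') (ka_next A k r) ->
    reachable A s0 k'.

Definition valid_step (A : kalg) (k : kstate) (r : P) : Prop :=
  [/\ forall lam k', List.In (lam, k') (ka_next A k r) -> 0 < lam,
      \sum_(p <- ka_next A k r) p.1 = 1
    & forall x, ka_adjust A k r + \sum_(p <- ka_next A k r) p.1 * komega p.2 x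
                <= update (komega k) r x].

Definition valid_kalg (A : kalg) (s0 : state) : Prop :=
  forall k, reachable A s0 k -> wf_kstate k /\ forall r, valid_step A k r.

Fixpoint Ecost (A : kalg) (k : kstate) (rho : seq P) : R :=
  match rho with
  | [::] => 0
  | r :: rho' => tcost (kpi k) r (mix (ka_next A k r)) +
                 \sum_(p <- ka_next A k r) p.1 * Ecost A p.2 rho'
  end.

Fixpoint Eadj (A : kalg) (k : kstate) (rho : seq P) (x : state) : R :=
  match rho with
  | [::] => komega k x
  | r :: rho' => ka_adjust A k r +
                 \sum_(p <- ka_next A k r) p.1 * Eadj A p.2 rho' x
  end.

Definition competitive (A : kalg) (s0 : state) (C : R) : Prop :=
  exists K : R, forall (rho : seq P) (x : state),
    Ecost A (kinit s0) rho <= C * Eadj A (kinit s0) rho x + K.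

End TwoCache.

(* Main.v *)
Require Import Defs.
From HB Require Import structures.
From mathcomp Require Import all_boot all_order all_algebra.
From mathcomp Require Import finmap.
From mathcomp Require Import boolp classical_sets reals.
From mathcomp Require Import lra zify.
Import Order.TTheory GRing.Theory Num.Theory.
Set Implicit Arguments. Unset Strict Implicit.
Local Open Scope ring_scope.
Local Open Scope classical_set_scope.
Section Pf.
Variable R : realType.
Variable P : choiceType.
Local Notation state := (state P).
Local Notation dist := (@dist R P).
Local Notation cost := (@cost R P).
Implicit Types x y z : state.

Lemma card2 x : #|` val x| = 2%N.
Proof. exact: (eqP (valP x)). Qed.

Lemma dist_ge0 x y : 0 <= dist x y.
Proof. by rewrite /Defs.dist ler0n. Qed.

Lemma dist_le2 x y : dist x y <= 2.
Proof.
have := fsubset_leq_card (fsubsetDl (val x) (val y)); rewrite card2 => H.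
by rewrite /Defs.dist (ler_nat R _ 2).
Qed.

Lemma dist0 x : dist x x = 0.
Proof. by rewrite /Defs.dist fsetDv cardfs0. Qed.

Lemma sub_eq x y : (val x `<=` val y)%fset -> x = y.
Proof.
move=> H; apply: val_inj; apply/eqP; rewrite eqEfcard H /= !card2 //.
Qed.

Lemma dist_ge1 x y : x != y -> 1 <= dist x y.
Proof.
move=> Hxy; rewrite /Defs.dist ler1n lt0n; apply/negP => /eqP H.
have: (val x `\` val y)%fset == fset0 by rewrite -cardfs_eq0 H.
by rewrite fsetD_eq0 => /sub_eq E; rewrite E eqxx in Hxy.
Qed.

Lemma cost_ge0 x r y : 0 <= cost x r y.
Proof.
rewrite /Defs.cost; case: ifP => _; first by [].
case: ifP => _; first exact: dist_ge0.
by apply: addr_ge0 => //; exact: dist_ge0.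
Qed.

Lemma cost_in x r y : r \in val x -> cost x r y = dist x y.
Proof.
move=> H; rewrite /Defs.cost; case: ifP => [/andP [_ Hn]|_].
  by exfalso; exact: (negP Hn H).
case: ifP => // Hc; exfalso; move/negbT: Hc; rewrite negb_or => /andP [Hn _].
exact: (negP Hn H).
Qed.

Lemma cost_out_ge1 x r y : r \notin val x -> 1 <= cost x r y.
Proof.
move=> H; rewrite /Defs.cost; case: ifP => [_|Hb]; first by lra.
have Hne : x != y.
  apply/negP => /eqP Exy; subst y; move/negbT: Hb; rewrite negb_and => /orP [].
    by rewrite eqxx.
  by move/negPn => H2; exact: (negP H H2).
have := dist_ge1 Hne; have := dist_ge0 x y.
case: ifP => _; lra.
Qed.

Lemma cost_in_y x r y : x != y -> r \in val y -> cost x r y = dist x y.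
Proof.
move=> Hne H; rewrite /Defs.cost; case: ifP => [/andP [E _]|_].
  by rewrite E in Hne.
case: ifP => // Hc; exfalso; move/negbT: Hc; rewrite negb_or => /andP [_ Hn].
exact: (negP Hn H).
Qed.

Lemma two_eq (a b : P) x y :
  (forall p, p \in val x -> p = a \/ p = b) ->
  (forall p, p \in val y -> p = a \/ p = b) -> x = y.
Proof.
have key : forall w : state, (forall p, p \in val w -> p = a \/ p = b) ->
   val w = [fset a; b]%fset.
  move=> w Hw; apply/eqP; rewrite eqEfcard card2 cardfs2.
  have -> : (val w `<=` [fset a; b])%fset.
    by apply/fsubsetP => p /Hw [->|->]; rewrite ?fset21 ?fset22.
  by case: (a != b).
by move=> Hx Hy; apply: val_inj; rewrite (key _ Hx) (key _ Hy).
Qed.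

Lemma no_three x (a b c : P) : a != b -> a != c -> b != c ->
  a \in val x -> b \in val x -> c \in val x -> False.
Proof.
move=> ab ac bc ha hb hc.
have S : ([fset a; b] `<=` val x)%fset.
  by apply/fsubsetP => p; rewrite !inE => /orP [] /eqP ->.
have : ([fset a; b]%fset == val x) by rewrite eqEfcard S card2 cardfs2 ab.
move/eqP => E; move: hc; rewrite -E !inE => /orP [] /eqP E2.
  by rewrite E2 eqxx in ac.
by rewrite E2 eqxx in bc.
Qed.

Lemma two_nb z r : r \notin val z -> exists x1 x2 : state,
  [/\ x1 != x2, r \in val x1, r \in val x2, dist z x1 <= 1 & dist z x2 <= 1].
Proof.
move=> rz.
have mk : forall e, e \in val z -> {x : state | val x = [fset r; e]%fset}.
  move=> e he; have ne : r != e by apply/eqP => E; rewrite E he in rz.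
  have Hc : #|` [fset r; e]%fset| == 2%N by rewrite cardfs2 ne.
  by exists (exist (fun s : {fset P} => #|` s| == 2%N) _ Hc).
have dz : forall e (he : e \in val z), dist z (sval (mk e he)) <= 1.
  move=> e he; rewrite /Defs.dist (proj2_sig (mk e he)).
  have S : (val z `\` [fset r; e] `<=` val z `\` [fset e])%fset.
    apply: fsetDS; apply/fsubsetP => p; rewrite !inE => /eqP ->; by rewrite eqxx orbT.
  have := fsubset_leq_card S; rewrite (@cardfsDS _ _ [fset e]%fset) ?fsub1set // card2 cardfs1 => H.
  by rewrite (ler_nat R _ 1).
have : val z != fset0 by rewrite -cardfs_eq0 card2.
case/fset0Pn => a ha.
have : (val z `\ a)%fset != fset0.
  by rewrite -cardfs_eq0 cardfsDS ?fsub1set // card2 cardfs1.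
case/fset0Pn => b; rewrite !inE => /andP [nba hb].
exists (sval (mk a ha)), (sval (mk b hb)); split.
- apply/eqP => /(congr1 val); rewrite (proj2_sig (mk a ha)) (proj2_sig (mk b hb)) => E.
  have : a \in [fset r; b]%fset by rewrite -E fset22.
  rewrite !inE => /orP [/eqP ar | /eqP ab].
  + by rewrite -ar ha in rz.
  + by rewrite ab eqxx in nba.
- by rewrite (proj2_sig (mk a ha)) fset21.
- by rewrite (proj2_sig (mk b hb)) fset21.
- exact: dz.
- exact: dz.
Qed.


Lemma min_support (w : state -> R) n (s : seq state) : (size s <= n)%N ->
  supports w [set x | x \in s] -> exists S, is_est_support w S.
Proof.
elim: n s => [|n IH] s Hs Hsup.
  exists [set x | x \in s]; split => // S' HS' _.
  move: Hs; rewrite leqn0 => /nilP E; subst s.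
  by apply/seteqP; split => // x /HS'.
case: (pselect (forall S', S' `<=` [set x | x \in s] -> supports w S' ->
                   S' = [set x | x \in s])) => [Hmin|Hn].
  by exists [set x | x \in s].
move/existsNP: Hn => [S' /not_implyP [HS' /not_implyP [HsupS' Hne]]].
have [x0 [x0s nx0]] : exists x0, x0 \in s /\ ~ S' x0.
  apply/not_existsP => Hall; apply: Hne; apply/seteqP; split => // x /= xs.
  by have := Hall x; move/not_andP => [] //; move/contrapT.
set s' := [seq x <- s | `[< S' x >]].
apply: (IH s').
  have : (count (fun x => `[< S' x >]) s < size s)%N.
    rewrite -(count_predC (fun x => `[< S' x >]) s) -[X in (X < _)%N]addn0 ltn_add2l.
    rewrite -has_count; apply/hasP; exists x0 => //=; by apply/negP => /asboolP.
  by rewrite size_filter => H; rewrite -ltnS; apply: leq_trans H Hs.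
move=> y; have [x Sx E] := HsupS' y; exists x => //=.
rewrite mem_filter; apply/andP; split; first by apply/asboolP.
exact: HS'.
Qed.

Lemma shape (k : kstate R P) : wf_kstate k -> at_most_two_active k ->
  exists z, (forall y, kpi k y = (y == z)%:R) /\
            (forall y, komega k y = komega k z + dist z y).
Proof.
move=> [[Hpos [s [us cov s1]]] [Hw0 Hw] [s' Hs']] [a [b Hab]].
have inab1 : forall x, supp (kpi k) x -> forall p, p \in val x -> p = a \/ p = b.
  by move=> x Sx p hp; apply: Hab; left; exists x.
have [z Hz] : exists z, kpi k z != 0.
  case: (pselect (exists z, kpi k z != 0)) => [//|Hn]; exfalso.
  have : \sum_(x <- s) kpi k x = 0.
    apply: big1 => x _; apply/eqP; apply/negPn/negP => H; apply: Hn; by exists x.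
  by rewrite s1 => /eqP; rewrite oner_eq0.
have Sz : supp (kpi k) z by rewrite /supp lt_neqAle eq_sym Hz Hpos.
have pi0 : forall y, y != z -> kpi k y = 0.
  move=> y Hy; apply/eqP; apply/negPn/negP => Hny.
  have Sy : supp (kpi k) y by rewrite /supp lt_neqAle eq_sym Hny Hpos.
  by have E := two_eq (inab1 _ Sy) (inab1 _ Sz); rewrite E eqxx in Hy.
exists z; split.
  move=> y; case: (eqVneq y z) => [->|Hyz]; last by rewrite pi0.
  rewrite -s1 (bigD1_seq z) //=; last exact: cov.
  by rewrite big1 ?addr0 // => x /pi0.
have [S [HS HSmin]] := min_support (leqnn _) Hs'.
have HS2 := HS.
move=> y; have [x Sx E] := HS y.
have inx : forall p, p \in val x -> p = a \/ p = b.
  move=> p hp; apply: Hab; right; exists S; split; first by split.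
  by exists x.
have Exz := two_eq inx (inab1 _ Sz); subst x; exact: E.
Qed.


Local Notation KS := (kstate R P).
Implicit Types L : seq (R * KS).

Lemma sum_le_In L (F G : R * KS -> R) :
  (forall p, List.In p L -> F p <= G p) -> \sum_(p <- L) F p <= \sum_(p <- L) G p.
Proof.
elim: L => [|q L IH] H; first by rewrite !big_nil.
rewrite !big_cons; apply: lerD; first by apply: H; left.
by apply: IH => p Hp; apply: H; right.
Qed.

Lemma sum_ge0_In L (F : R * KS -> R) :
  (forall p, List.In p L -> 0 <= F p) -> 0 <= \sum_(p <- L) F p.
Proof.
move=> H; have := sum_le_In (F := fun _ => 0) H; by rewrite big1.
Qed.

Lemma sum_ge_term L (F : R * KS -> R) p :
  (forall q, List.In q L -> 0 <= F q) -> List.In p L -> F p <= \sum_(q <- L) F q.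
Proof.
elim: L => [|q L IH] H //= [Ep|Hp]; rewrite big_cons.
  subst q; rewrite lerDl; apply: sum_ge0_In => q Hq; apply: H; by right.
have := H q (or_introl erefl); have := IH (fun q Hq => H q (or_intror Hq)) Hp.
lra.
Qed.

Section Mix.
Variable f : R * KS -> state.
Variable L : seq (R * KS).
Hypothesis Hpos : forall p, List.In p L -> 0 < p.1.
Hypothesis Hind : forall p, List.In p L -> forall y, kpi p.2 y = (y == f p)%:R.

Lemma mix_eq y : mix L y = \sum_(p <- L) p.1 * (y == f p)%:R.
Proof.
rewrite /mix; elim: L Hind => [|q L' IH] H; first by rewrite !big_nil.
rewrite !big_cons H; last by left.
by rewrite IH // => p Hp; apply: H; right.
Qed.

Lemma mix_ge0 y : 0 <= mix L y.
Proof.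
rewrite mix_eq; apply: sum_ge0_In => p Hp; apply: mulr_ge0; last by rewrite ler0n.
exact: ltW (Hpos Hp).
Qed.

Lemma mix_pos p : List.In p L -> p.1 <= mix L (f p).
Proof.
move=> Hp; rewrite mix_eq.
have := sum_ge_term (F := fun q => q.1 * (f p == f q)%:R) _ Hp.
rewrite eqxx mulr1; apply => q Hq; apply: mulr_ge0; last by rewrite ler0n.
exact: ltW (Hpos Hq).
Qed.

Lemma in_map_f p : List.In p L -> f p \in map f L.
Proof.
elim: L => [|q L' IH] //= [->|Hp]; first by rewrite inE eqxx.
by rewrite inE IH ?orbT.
Qed.

Lemma mix_cov y : mix L y != 0 -> y \in map f L.
Proof.
rewrite mix_eq; elim: L => [|q L' IH]; first by rewrite big_nil eqxx.
rewrite big_cons /= inE; have [E|NE] := eqVneq y (f q); first by [].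
by rewrite mulr0 add0r => /IH ->; rewrite orbT.
Qed.

Lemma sum_ind (sy : seq state) (F : state -> R) : uniq sy ->
  (forall p, List.In p L -> f p \in sy) ->
  \sum_(y <- sy) mix L y * F y = \sum_(p <- L) p.1 * F (f p).
Proof.
move=> usy; under eq_bigr do rewrite mix_eq.
elim: L => [|q L' IH] H.
  by rewrite big_nil big1 // => y _; rewrite big_nil mul0r.
under eq_bigr do rewrite big_cons mulrDl.
rewrite big_split /= big_cons IH; last by move=> p Hp; apply: H; right.
congr (_ + _).
rewrite (bigD1_seq (f q)) //=; last by apply: H; left.
rewrite eqxx mulr1 big1 ?addr0 // => y Hy.
by rewrite (negbTE Hy) mulr0 mul0r.
Qed.


Hypothesis Hsum : \sum_(p <- L) p.1 = 1.

Lemma fp_in (sy : seq state) : (forall y, mix L y != 0 -> y \in sy) ->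
  forall p, List.In p L -> f p \in sy.
Proof.
move=> H p Hp; apply: H; have := mix_pos Hp; have := Hpos Hp.
move=> h1 h2; apply/eqP => E; rewrite E in h2; lra.
Qed.

Lemma tcost_eq z r :
  tcost (fun y => (y == z)%:R) r (mix L) = \sum_(p <- L) p.1 * cost z r (f p).
Proof.
rewrite /tcost; set V := \sum_(p <- L) _.
suff -> : [set v | exists g sx sy, coupling_on g (fun y => (y == z)%:R) (mix L) sx sy /\
         v = \sum_(x <- sx) \sum_(y <- sy) g x y * cost x r y] = [set V] by rewrite inf1.
apply/seteqP; split => v /=.
  move=> [g [sx [sy [[g0 gs [usx usy] [cx cy] [mx my]] ->]]]].
  have zsx : z \in sx by apply: cx; rewrite eqxx oner_eq0.
  have gz : forall x y, x != z -> g x y = 0.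
    move=> x y Hx; apply/eqP; apply/negPn/negP => /gs [Sx _].
    by move: Sx; rewrite /supp (negbTE Hx) ltxx.
  have gzy : forall y, g z y = mix L y.
    move=> y; rewrite -my (bigD1_seq z) //= [X in _ + X]big1 ?addr0 // => x /gz; exact.
  rewrite (bigD1_seq z) //= [X in _ + X]big1 ?addr0; last first.
    by move=> x Hx; apply: big1 => y _; rewrite gz // mul0r.
  under eq_bigr do rewrite gzy.
  by apply: sum_ind => //; apply: fp_in.
move=> ->; exists (fun x y => (x == z)%:R * mix L y), [:: z], (undup (map f L)).
have cov : forall y, mix L y != 0 -> y \in undup (map f L).
  by move=> y Hy; rewrite mem_undup; apply: mix_cov.
split; last first.
  rewrite big_cons big_nil addr0 /V -(sum_ind (cost z r) (undup_uniq (map f L)) (fp_in cov)).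
  by apply: eq_bigr => y _; rewrite eqxx mul1r.
split.
- by move=> x y; apply: mulr_ge0; [rewrite ler0n | exact: mix_ge0].
- move=> x y; have [->|Hx] := eqVneq x z; last by rewrite mul0r eqxx.
  rewrite /= mulr1n mul1r => Hy; split; first by rewrite /supp eqxx ltr01.
  by rewrite /supp lt_neqAle eq_sym Hy mix_ge0.
- by rewrite undup_uniq.
- split; last exact: cov.
  by move=> x; have [->|Hx] := eqVneq x z; rewrite ?inE ?eqxx // eqxx.
- split.
    move=> x; rewrite -big_distrr /=.
    have -> : \sum_(i <- undup (map f L)) mix L i = 1.
      rewrite -Hsum; have := sum_ind (fun _ => 1) (undup_uniq (map f L)) (fp_in cov).
      under eq_bigr do rewrite mulr1; move=> ->; by under eq_bigr do rewrite mulr1.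
    by rewrite mulr1.
  by move=> y; rewrite big_cons big_nil addr0 eqxx mul1r.
Qed.

End Mix.


Lemma update_le (w : state -> R) r x y : (forall x, 0 <= w x) ->
  update w r y <= w x + cost x r y.
Proof.
move=> w0; rewrite /update; apply: ge_inf; last by exists x.
exists 0 => v [x' _ <-]; apply: addr_ge0 => //; exact: cost_ge0.
Qed.

Section ELemmas.
Variable L : seq (R * KS).
Local Notation E F := (\sum_(p <- L) p.1 * F p).

Lemma E_mono (F G : R * KS -> R) : (forall p, List.In p L -> 0 < p.1) ->
  (forall p, List.In p L -> F p <= G p) -> E F <= E G.
Proof.
move=> H1 H2; apply: sum_le_In => p Hp; apply: ler_wpM2l; [exact: ltW (H1 p Hp)|exact: H2].
Qed.

Lemma E_eq (F G : R * KS -> R) :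
  (forall p, List.In p L -> F p = G p) -> E F = E G.
Proof.
elim: L => [|q L' IH] H; first by rewrite !big_nil.
by rewrite !big_cons H ?IH //; [move=> p Hp; apply: H; right | left].
Qed.

Lemma E_add (F G : R * KS -> R) : E (fun p => F p + G p) = E F + E G.
Proof. by rewrite -big_split; apply: eq_bigr => p _; rewrite mulrDr. Qed.

Lemma E_sub (F G : R * KS -> R) : E (fun p => F p - G p) = E F - E G.
Proof.
rewrite -sumrB; apply: eq_bigr => p _; by rewrite mulrBr.
Qed.

Lemma E_scale (a : R) (F : R * KS -> R) : E (fun p => a * F p) = a * E F.
Proof. by rewrite mulr_sumr; apply: eq_bigr => p _; rewrite mulrCA. Qed.

Lemma E_const (a : R) : \sum_(p <- L) p.1 = 1 -> E (fun _ => a) = a.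
Proof. by move=> H; rewrite -big_distrl /= H mul1r. Qed.

End ELemmas.

Section Main.
Variable A : kalg R P.
Variable s0 : state.
Hypothesis Hvalid : valid_kalg A s0.
Hypothesis Hact : forall k, reachable A s0 k -> at_most_two_active k.
Variables q0 q1 q2 : P.
Hypothesis d01 : q0 != q1.
Hypothesis d02 : q0 != q2.
Hypothesis d12 : q1 != q2.

Definition zprop (k : KS) (z : state) :=
  (forall y, kpi k y = (y == z)%:R) /\ (forall y, komega k y = komega k z + dist z y).

Definition zof (k : KS) : state := xget s0 (zprop k).

Lemma zofP k : reachable A s0 k -> zprop k (zof k).
Proof.
move=> Hk; have [wf _] := Hvalid Hk.
have [z Hz] := shape wf (Hact Hk).
by rewrite /zof; case: xgetP => // /(_ z).
Qed.

Definition q (i : nat) : P :=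
  if (i %% 3)%N == 0 then q0 else if (i %% 3)%N == 1 then q1 else q2.

Lemma q_dist i : [/\ q i != q i.+1, q i != q i.+2 & q i.+1 != q i.+2].
Proof.
rewrite /q.
have: ((i %% 3)%N == 0%N) || ((i %% 3)%N == 1%N) || ((i %% 3)%N == 2%N) by lia.
case/orP => [/orP [] |] /eqP H; [have h1 : (i.+1 %% 3)%N = 1%N by lia | have h1 : (i.+1 %% 3)%N = 2%N by lia| have h1 : (i.+1 %% 3)%N = 0%N by lia];
[have h2 : (i.+2 %% 3)%N = 2%N by lia | have h2 : (i.+2 %% 3)%N = 0%N by lia| have h2 : (i.+2 %% 3)%N = 1%N by lia]; rewrite H h1 h2 /=.
- by rewrite d01 d02 d12.
- by rewrite d12 eq_sym d01 eq_sym d02.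
- by rewrite eq_sym d02 eq_sym d12 d01.
Qed.

Definition rho t n := map q (iota t n).

Definition mm (z : state) t : nat := (q t \in val z) * (1 + (q t.+1 \in val z)).

Lemma mm_le2 z t : (mm z t <= 2)%N.
Proof. by rewrite /mm; case: (q t \in _); case: (q t.+1 \in _). Qed.

Lemma mm_step z t : q t \in val z -> (mm z t.+1 + 1 <= mm z t)%N.
Proof.
move=> h; have [n01 n02 n12] := q_dist t.
rewrite /mm h.
case h1: (q t.+1 \in val z); case h2: (q t.+2 \in val z) => //.
by exfalso; apply: (no_three n01 n02 n12 h h1 h2).
Qed.

Lemma mm0 z t : q t \notin val z -> mm z t = 0%N.
Proof. by rewrite /mm => /negbTE ->. Qed.

Lemma main_ind n : forall t k z x, reachable A s0 k -> zprop k z ->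
  n%:R / 12 - (mm z t)%:R / 12 - 3 / 2 * komega k z - 3
   <= Ecost A k (rho t n) - 3 / 2 * Eadj A k (rho t n) x.
Proof.
have hm : forall z t, ((mm z t)%:R : R) <= 2.
  by move=> z t; rewrite (ler_nat R _ 2) mm_le2.
have hm0 : forall z t, (0 : R) <= (mm z t)%:R by move=> *; rewrite ler0n.
elim: n => [|n IH] t k z x Hk [Hpi Hom].
  rewrite /= (Hom x); have := dist_le2 z x; have := hm z t; have := hm0 z t.
  rewrite mul0r; lra.
rewrite /rho /= -/(rho t.+1 n).
set r := q t; set L := ka_next A k r.
have [[_ [Hw0 _] _] Hvs] := Hvalid Hk.
have [Hlam Hsum Hadj] := Hvs r.
have HR : forall p, List.In p L -> reachable A s0 p.2.
  by case=> lam k' H; exact: reachS Hk H.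
have Hpos : forall p, List.In p L -> 0 < p.1.
  by case=> lam k' H; exact: Hlam H.
have HZ : forall p, List.In p L -> zprop p.2 (zof p.2) := fun p Hp => zofP (HR p Hp).
have Hind : forall p, List.In p L -> forall y, kpi p.2 y = (y == zof p.2)%:R.
  by move=> p Hp; have [] := HZ p Hp.
have Hpi' : kpi k = fun y => (y == z)%:R by apply: funext.
rewrite Hpi' (tcost_eq Hpos Hind Hsum) -/L.
set c := komega k z.
set cp := fun p : R * KS => komega p.2 (zof p.2).
set mp := fun p : R * KS => ((mm (zof p.2) t.+1)%:R : R).
have IHs : \sum_(p <- L) p.1 * (n%:R / 12 - mp p / 12 - 3 / 2 * cp p - 3)
         <= \sum_(p <- L) p.1 * (Ecost A p.2 (rho t.+1 n) - 3 / 2 * Eadj A p.2 (rho t.+1 n) x).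
  by apply: E_mono => // p Hp; apply: IH; [exact: HR | exact: HZ].
rewrite !E_sub !E_scale !(E_const _ Hsum) in IHs.
have Emp : \sum_(p <- L) p.1 * (mp p / 12) = (\sum_(p <- L) p.1 * mp p) / 12.
  by rewrite mulr_suml; apply: eq_bigr => p _; rewrite mulrA.
rewrite Emp in IHs.
have Hom2 : forall x0, ka_adjust A k r + \sum_(p <- L) p.1 * cp p
      + \sum_(p <- L) p.1 * dist (zof p.2) x0 <= c + cost z r x0.
  move=> x0; rewrite -addrA -E_add.
  have -> : \sum_(p <- L) p.1 * (cp p + dist (zof p.2) x0)
         = \sum_(p <- L) p.1 * komega p.2 x0.
    by apply: E_eq => p Hp; have [_ ->] := HZ p Hp.
  apply: le_trans (Hadj x0) _; exact: update_le.
have hn : (n.+1%:R : R) = n%:R + 1 by rewrite -addn1 natrD.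
rewrite hn.
have Emp2 : forall F : R * KS -> R, \sum_(p <- L) p.1 * (F p - mp p / 12)
   = \sum_(p <- L) p.1 * F p - (\sum_(p <- L) p.1 * mp p) / 12.
  by move=> F; rewrite E_sub Emp.
have [rz|rz] := boolP (r \in val z).
  have H2 := Hom2 z; rewrite cost_in // dist0 in H2.
  have hmz := mm_step rz; have hmz' : ((mm z t.+1)%:R : R) + 1 <= (mm z t)%:R.
    by move: hmz; rewrite -(ler_nat R) natrD mulr1n.
  have PT : \sum_(p <- L) p.1 * (1 / 12 - (mm z t)%:R / 12) <=
     \sum_(p <- L) p.1 * (cost z r (zof p.2) + 3 / 2 * dist (zof p.2) z - mp p / 12).
    apply: E_mono => // p Hp; rewrite cost_in //.
    have [E|NE] := eqVneq (zof p.2) z.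
      rewrite /mp E !dist0; lra.
    have := dist_ge1 NE; have := dist_ge1 (x := z) (y := zof p.2); rewrite eq_sym => /(_ NE).
    have := hm (zof p.2) t.+1; have := hm0 z t; rewrite /mp; lra.
  rewrite (E_const _ Hsum) Emp2 E_add E_scale in PT.
  lra.
have [x1 [x2 [n12 r1 r2 d1 d2]]] := two_nb rz.
have H1 := Hom2 x1; have H2 := Hom2 x2.
have nz1 : z != x1 by apply/eqP => E; rewrite E r1 in rz.
have nz2 : z != x2 by apply/eqP => E; rewrite E r2 in rz.
rewrite (cost_in_y nz1 r1) in H1; rewrite (cost_in_y nz2 r2) in H2.
rewrite (mm0 rz).
have PT : \sum_(p <- L) p.1 * (1 / 12 + 3 / 2) <=
   \sum_(p <- L) p.1 * (cost z r (zof p.2) +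
        3 / 4 * (dist (zof p.2) x1 + dist (zof p.2) x2) - mp p / 12).
  apply: E_mono => // p Hp.
  have hc := cost_out_ge1 (zof p.2) rz.
  have hd : 1 <= dist (zof p.2) x1 + dist (zof p.2) x2.
    have := dist_ge0 (zof p.2) x1; have := dist_ge0 (zof p.2) x2.
    have [E|NE] := eqVneq (zof p.2) x1.
      have : zof p.2 != x2 by rewrite E.
      move/dist_ge1; lra.
    move: (dist_ge1 NE); lra.
  have := hm (zof p.2) t.+1; rewrite /mp; lra.
rewrite (E_const _ Hsum) Emp2 E_add E_scale E_add in PT.
lra.
Qed.

End Main.

End Pf.

Theorem mainTheorem11 (R : realType) (P : choiceType)
    (P_infinite : forall s : seq P, exists p : P, p \notin s)
    (s0 : state P) :
  ~ exists A : kalg R P,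
      [/\ valid_kalg A s0,
          competitive A s0 (3 / 2)
        & forall k, reachable A s0 k -> at_most_two_active k].
Proof.
move=> [A [Hv [K HK] Hact]].
have [p0 _] := P_infinite [::].
have [p1 h1] := P_infinite [:: p0].
have [p2 h2] := P_infinite [:: p0; p1].
have d01 : p0 != p1 by move: h1; rewrite inE eq_sym.
have d02 : p0 != p2 by move: h2; rewrite !inE negb_or eq_sym => /andP [].
have d12 : p1 != p2 by move: h2; rewrite !inE negb_or [p2 == p1]eq_sym => /andP [].
have Hk0 : reachable A s0 (kinit R s0) by apply: reach0.
have Hz := zofP Hv Hact Hk0.
have hb := Num.Theory.archi_boundP (normr_ge0 (12 * K + 100)).
set n := Num.Def.archi_bound _ in hb.
have M := main_ind Hv Hact d01 d02 d12 n 0 s0 Hk0 Hz.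
have HKn := HK (rho p0 p1 p2 0 n) s0.
have c2 : komega (kinit R s0) (zof s0 (kinit R s0)) <= 2 by exact: dist_le2.
have m2 : ((mm p0 p1 p2 (zof s0 (kinit R s0)) 0)%:R : R) <= 2.
  by rewrite (ler_nat R _ 2) mm_le2.
have := ler_norm (12 * K + 100).
lra.
Qed.
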